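(* Let $c > 0$, $\rho > 0$, and $\mathbf{d}\in\mathbb{R}^n$ with $\eta := \|\mathbf{d}\|_2 > 0$. Set $D = \dfrac{c}{\rho\,\eta^3}$. Then the polynomial $F(\tau) = \tau^3 - \tau^2 - D$ has exactly one real root, given by $$\tau^* = \frac13 + \frac13\left(C + \frac1C\right), \qquad C = \sqrt[3]{\frac{27D + 2 + \sqrt{(27D+2)^2 - 4}}{2}},$$ and $\tau^*>0$. Moreover, the problem $$\min_{\mathbf{y}\in\mathbb{R}^n\setminus\{\mathbf{0}\}} \ \frac{c}{\|\mathbf{y}\|_2} + \frac{\rho}{2}\|\mathbf{y}-\mathbf{d}\|_2^2$$ has the unique minimizer $\mathbf{y} = \tau^*\mathbf{d}$.
   Context: $\sqrt[3]{\cdot}$ denotes the real cube root. *)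

(* Defs.v *)
From Stdlib Require Import Reals.
Open Scope R_scope.

Definition cbrt (x : R) : R :=
  match Rlt_dec 0 x with
  | left _ => Rpower x (1/3)
  | right _ =>
      match Rlt_dec x 0 with
      | left _ => - Rpower (- x) (1/3)
      | right _ => 0
      end
  end.

(* Vectors of R^n are represented by functions nat -> R; only the
   coordinates 0..n-1 are relevant. *)
Fixpoint sumsq (n : nat) (y : nat -> R) : R :=
  match n with
  | O => 0
  | S k => sumsq k y + y k ^ 2
  end.

Definition norm2 (n : nat) (y : nat -> R) : R := sqrt (sumsq n y).

Definition nonzero_vec (n : nat) (y : nat -> R) : Prop :=
  exists i, (i < n)%nat /\ y i <> 0.

Definition vec_eq (n : nat) (y z : nat -> R) : Prop :=
  forall i, (i < n)%nat -> y i = z i.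

Definition objective (n : nat) (c rho : R) (d y : nat -> R) : R :=
  c / norm2 n y + rho / 2 * (norm2 n (fun i => y i - d i)) ^ 2.

(* Main.v *)
Require Import Defs.
From Stdlib Require Import Reals Lra Psatz Lia FunctionalExtensionality Classical.
Open Scope R_scope.

Fixpoint dotp (n : nat) (y z : nat -> R) : R :=
  match n with O => 0 | S k => dotp k y z + y k * z k end.

Lemma dotp_scal n a d : dotp n (fun i => a * d i) d = a * sumsq n d.
Proof. induction n; simpl; [ring|rewrite IHn; ring]. Qed.

Lemma sumsq_ge0 n y : 0 <= sumsq n y.
Proof. induction n; simpl; nra. Qed.

Lemma sumsq_lin n a b y z :
  sumsq n (fun i => a * y i + b * z i) =
  a^2 * sumsq n y + 2*a*b*dotp n y z + b^2 * sumsq n z.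
Proof. induction n; simpl; [ring|rewrite IHn; ring]. Qed.

Lemma sumsq_zero n y : sumsq n y = 0 -> forall i, (i < n)%nat -> y i = 0.
Proof.
  induction n; intros H i Hi; [lia|]. simpl in H.
  pose proof (sumsq_ge0 n y).
  assert (sumsq n y = 0 /\ y n = 0) as [H1 H2] by (split; nra).
  destruct (Nat.eq_dec i n); [subst; auto|]. apply IHn; auto; lia.
Qed.

Lemma sumsq_nonzero n y : 0 < sumsq n y -> nonzero_vec n y.
Proof.
  intros H. unfold nonzero_vec.
  destruct (Classical_Prop.classic (exists i, (i < n)%nat /\ y i <> 0)) as [|Hn]; auto.
  exfalso. enough (sumsq n y = 0) by lra.
  clear H. induction n; simpl; auto.
  rewrite IHn.
  - destruct (Req_dec (y n) 0) as [->|Hy]; [ring|]. exfalso; apply Hn; exists n; split; auto.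
  - intros [i [Hi Hy]]. apply Hn. exists i; split; auto.
Qed.

Lemma nonzero_pos n y : nonzero_vec n y -> 0 < sumsq n y.
Proof.
  intros [i [Hi Hy]]. pose proof (sumsq_ge0 n y).
  destruct (Req_dec (sumsq n y) 0) as [H0|]; [|lra].
  exfalso; apply Hy; eapply sumsq_zero; eauto.
Qed.

Lemma sq_sqrt' x : 0 <= x -> sqrt x ^ 2 = x.
Proof. intros; simpl; rewrite Rmult_1_r; apply sqrt_sqrt; auto. Qed.

Lemma cube_unique D s t : 0 < D -> s^3 - s^2 = D -> t^3 - t^2 = D -> s = t.
Proof.
  intros HD Hs Ht.
  assert (1 < s) by nra. assert (1 < t) by nra.
  assert ((s - t) * (s^2 + s*t + t^2 - s - t) = 0) by nra.
  assert (s^2 + s*t + t^2 - s - t > 0) by nra. nra.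
Qed.

Lemma hlemma D tau : 1 < tau -> tau ^ 3 - tau ^ 2 = D -> forall t, 0 < t ->
  D / tau + (tau - 1)^2/2 <= D / t + (t - 1)^2/2
  /\ (D / t + (t - 1)^2/2 <= D / tau + (tau - 1)^2/2 -> t = tau).
Proof.
  intros Htau1 Htau t Ht.
  assert (E : 2 * t * tau * ((D / t + (t - 1)^2/2) - (D / tau + (tau - 1)^2/2))
            = tau * ((t - tau)^2 * (t + 2 * tau - 2))).
  { rewrite <- Htau. field; lra. }
  assert (P : 0 < tau * (t + 2 * tau - 2)) by nra.
  assert (0 < 2 * t * tau) by nra.
  pose proof (pow2_ge_0 (t - tau)).
  split.
  - assert (0 <= tau * ((t - tau)^2 * (t + 2 * tau - 2))).
    { apply Rmult_le_pos; [lra|apply Rmult_le_pos; lra]. }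
    set (X := D / t + (t - 1)^2/2) in *. set (Y := D / tau + (tau - 1)^2/2) in *.
    destruct (Rle_lt_dec Y X); auto. nra.
  - intro Hle.
    set (X := D / t + (t - 1)^2/2) in *. set (Y := D / tau + (tau - 1)^2/2) in *.
    assert (tau * ((t - tau)^2 * (t + 2 * tau - 2)) <= 0) by nra.
    assert ((t - tau)^2 = 0) by nra.
    nra.
Qed.

Theorem mainTheorem6 (n : nat) (c rho : R) (d : nat -> R)
  (hc : 0 < c) (hrho : 0 < rho) (heta : 0 < norm2 n d) :
  let eta := norm2 n d in
  let D := c / (rho * eta ^ 3) in
  let C := cbrt ((27 * D + 2 + sqrt ((27 * D + 2) ^ 2 - 4)) / 2) in
  let tau := 1/3 + 1/3 * (C + 1 / C) in
  (* F(t) = t^3 - t^2 - D has exactly one real root, namely tau *)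
  (forall t : R, t ^ 3 - t ^ 2 - D = 0 <-> t = tau) /\
  0 < tau /\
  (* tau * d is the unique minimizer over R^n \ {0} *)
  nonzero_vec n (fun i => tau * d i) /\
  (forall y : nat -> R, nonzero_vec n y ->
     objective n c rho d (fun i => tau * d i) <= objective n c rho d y) /\
  (forall y : nat -> R, nonzero_vec n y ->
     objective n c rho d y <= objective n c rho d (fun i => tau * d i) ->
     vec_eq n y (fun i => tau * d i)).
Proof.
  intros eta D C tau.
  assert (HD : 0 < D) by (unfold D; apply Rdiv_lt_0_compat; auto; apply Rmult_lt_0_compat; auto; apply pow_lt; auto).
  set (K := 27 * D + 2).
  set (Q := sqrt (K ^ 2 - 4)).
  assert (HQ : Q ^ 2 = K^2 - 4) by (apply sq_sqrt'; unfold K; nra).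
  assert (HQ0 : 0 <= Q) by apply sqrt_pos.
  set (A := (K + Q) / 2).
  assert (HA : 1 < A) by (unfold A, K in *; lra).
  assert (HC0 : 0 < C /\ C ^ 3 = A).
  { unfold C. fold K Q A. unfold cbrt.
    destruct (Rlt_dec 0 A) as [h|h]; [|lra]. split.
    - unfold Rpower; apply exp_pos.
    - rewrite <- Rpower_pow by (unfold Rpower; apply exp_pos).
      rewrite Rpower_mult. replace (1/3 * INR 3) with 1 by (simpl; field).
      apply Rpower_1; lra. }
  destruct HC0 as [HC0 HC3].
  assert (HA' : A * ((K - Q)/2) = 1) by (unfold A; nra).
  assert (Hsum : C^3 + 1 / C^3 = K).
  { rewrite HC3. assert (1 / A = (K - Q)/2) by (field_simplify_eq; [nra|lra]).
    rewrite H. unfold A. field. }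
  assert (Htau : tau ^ 3 - tau ^ 2 = D).
  { unfold tau. set (u := C + 1 / C).
    assert (u ^ 3 = K + 3 * u) by (unfold u; rewrite <- Hsum; field; lra).
    unfold K in H. nra. }
  assert (Htau1 : 1 < tau) by nra.
  assert (Htau0 : 0 < tau) by lra.
  set (Sd := sumsq n d).
  assert (HSd : 0 < Sd) by (unfold Sd; unfold norm2 in heta;
     destruct (Rle_lt_dec (sumsq n d) 0) as [h|h]; auto;
     rewrite sqrt_neg_0 in heta; lra).
  assert (Heta2 : eta ^ 2 = Sd) by (apply sq_sqrt'; lra).
  assert (Heta : 0 < eta) by exact heta.
  assert (HcD : c = D * rho * eta ^ 3) by (unfold D; field; split; lra).
  assert (Hobj : forall y, nonzero_vec n y ->
     objective n c rho d y =
     c / sqrt (sumsq n y) + rho / 2 * (sumsq n y - 2 * dotp n y d + Sd)).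
  { intros y Hy. unfold objective, norm2. f_equal. f_equal.
    rewrite sq_sqrt' by apply sumsq_ge0.
    replace (fun i => y i - d i) with (fun i => 1 * y i + (-1) * d i)
      by (apply functional_extensionality; intro; ring).
    rewrite sumsq_lin. fold Sd; ring. }
  assert (Hnz : nonzero_vec n (fun i => tau * d i)).
  { apply sumsq_nonzero. replace (fun i => tau * d i) with (fun i => tau * d i + 0 * d i)
      by (apply functional_extensionality; intro; ring).
    rewrite sumsq_lin. fold Sd. nra. }
  assert (Hsy_tau : sumsq n (fun i => tau * d i) = tau^2 * Sd /\
                    dotp n (fun i => tau * d i) d = tau * Sd).
  { split.
    - replace (fun i => tau * d i) with (fun i => tau * d i + 0 * d i)
        by (apply functional_extensionality; intro; ring).
      rewrite sumsq_lin. fold Sd. ring.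
    - unfold Sd. apply dotp_scal. }
  destruct Hsy_tau as [Hs1 Hs2].
  assert (Hsqtau : sqrt (tau^2 * Sd) = tau * eta).
  { rewrite sqrt_mult by nra. rewrite sqrt_pow2 by lra. reflexivity. }
  assert (Hobjtau : objective n c rho d (fun i => tau * d i) =
     rho * eta^2 * (D / tau + (tau - 1)^2 / 2)).
  { rewrite Hobj by auto. rewrite Hs1, Hs2, Hsqtau, HcD, <- Heta2. field; lra. }
  assert (Hkey : forall y, nonzero_vec n y ->
     let r := sqrt (sumsq n y) in
     0 < r /\ r^2 = sumsq n y /\
     dotp n y d <= r * eta /\
     objective n c rho d y = rho * eta^2 * (D / (r/eta) + (r/eta - 1)^2 / 2)
        + rho * (r * eta - dotp n y d)).
  { intros y Hy r. pose proof (nonzero_pos n y Hy) as Hp.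
    assert (Hr : 0 < r) by (apply sqrt_lt_R0; auto).
    assert (Hr2 : r^2 = sumsq n y) by (apply sq_sqrt'; lra).
    pose proof (sumsq_ge0 n (fun i => eta * y i + (- r) * d i)) as Hcs.
    rewrite sumsq_lin in Hcs. fold Sd in Hcs.
    split; [auto|split; [auto|split]].
    - rewrite <- Hr2, <- Heta2 in Hcs.
      assert (0 <= (2 * eta * r) * (r * eta - dotp n y d)) by nra.
      assert (0 < 2 * eta * r) by nra.
      destruct (Rle_lt_dec (dotp n y d) (r * eta)); auto. nra.
    - rewrite Hobj by auto. fold r. rewrite HcD, <- Hr2, <- Heta2. field; lra. }
  pose proof (hlemma D tau Htau1 Htau) as Hh.
  split; [|split; [lra|split; [auto|split]]].
  - intro t; split; intro H.
    + apply (cube_unique D); auto; lra.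
    + subst t; lra.
  - intros y Hy. destruct (Hkey y Hy) as [Hr [Hr2 [Hdot Ho]]].
    rewrite Ho, Hobjtau.
    destruct (Hh (sqrt (sumsq n y) / eta)) as [H1 _]; [apply Rdiv_lt_0_compat; auto|].
    assert (0 < rho * eta^2) by nra. nra.
  - intros y Hy Hle. destruct (Hkey y Hy) as [Hr [Hr2 [Hdot Ho]]].
    set (r := sqrt (sumsq n y)) in *.
    rewrite Ho, Hobjtau in Hle.
    destruct (Hh (r / eta)) as [H1 H2]; [apply Rdiv_lt_0_compat; auto|].
    assert (0 < rho * eta^2) by nra.
    assert (Hp : 0 <= rho * (r * eta - dotp n y d)) by nra.
    assert (Hdeq : rho * (r * eta - dotp n y d) = 0) by nra.
    assert (Hte : r / eta = tau) by (apply H2; nra).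
    assert (Hreq : r = tau * eta) by (rewrite <- Hte; field; lra).
    assert (Hdot' : dotp n y d = r * eta) by nra.
    pose proof (sumsq_lin n eta (- r) y d) as Hcs. fold Sd in Hcs.
    rewrite <- Hr2, <- Heta2, Hdot' in Hcs.
    assert (Hz : sumsq n (fun i => eta * y i + - r * d i) = 0) by (rewrite Hcs; ring).
    intros i Hi. pose proof (sumsq_zero _ _ Hz i Hi) as Hzi. simpl in Hzi.
    rewrite Hreq in Hzi.
    apply (Rmult_eq_reg_l eta); [|lra]. nra.
Qed.
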